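(* Let $M$ be a $4$-dimensional Riemannian manifold with metric $g$ and affinor structure $q$ (a $(1,1)$-tensor field) whose components in local coordinates $(x^1,x^2,x^3,x^4)$ are $$g_{ij}=\begin{pmatrix} A & B & C & B\\ B & A & B & C\\ C & B & A & B\\ B & C & B & A\end{pmatrix},\qquad q_i^{\ j}=\begin{pmatrix} 0&1&0&0\\0&0&1&0\\0&0&0&1\\1&0&0&0\end{pmatrix},$$ where $A,B,C$ are smooth functions with $0<B<C<A$, and suppose $q$ is parallel, i.e. $\nabla q=0$ where $\nabla$ is the Levi-Civita connection of $g$. Let $p\in M$ and let $x=(x^1,x^2,x^3,x^4)\in T_pM$ satisfy $((x^1-x^3)^2+(x^2-x^4)^2)(x^1-x^2+x^3-x^4)(x^1+x^2+x^3+x^4)\neq 0$ (so that $x,qx,q^2x,q^3x$ are linearly independent). Then the sectional curvatures of the $2$-planes $E_1=\{x,qx\}$, $E_3=\{q^3x,x\}$, $E_4=\{q^2x,qx\}$, $E_6=\{q^2x,q^3x\}$ are all equal, and the sectional curvatures of the $2$-planes $E_2=\{x,q^2x\}$ and $E_5=\{q^3x,qx\}$ are zero.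
   Context: $R$ denotes the Riemann curvature tensor of $\nabla$, $R(x,y)z=\nabla_x\nabla_yz-\nabla_y\nabla_xz-\nabla_{[x,y]}z$, with associated $(0,4)$-tensor $R(x,y,z,u)=g(R(x,y)z,u)$. The sectional curvature of the $2$-plane spanned by linearly independent $x,y\in T_pM$ is $\mu(\{x,y\};p)=\dfrac{R(x,y,x,y)}{g(x,x)g(y,y)-g(x,y)^2}$. The structure satisfies $q^4=\mathrm{id}$ and $g(qx,qy)=g(x,y)$. *)

(* Defs.v *)
(* Local-coordinate model of the paper's
   setting: the manifold is (a chart domain) U, an open subset of R^4,
   points and tangent vectors are row vectors 'rV[R]_4. *)
From HB Require Import structures.
From mathcomp Require Import all_boot all_order all_algebra.
From mathcomp Require Import all_classical all_reals all_analysis.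
Set Implicit Arguments. Unset Strict Implicit. Unset Printing Implicit Defensive.
Import Order.TTheory GRing.Theory Num.Theory.
Import numFieldNormedType.Exports.
Local Open Scope classical_set_scope.
Local Open Scope ring_scope.

Section Geom.
Variable R : realType.
Local Notation V := 'rV[R]_4.

Definition ebasis (i : 'I_4) : V := delta_mx 0 i.

Definition pd (i : 'I_4) (f : V -> R) : V -> R := fun p => 'D_(ebasis i) f p.

Definition ipd (s : seq 'I_4) (f : V -> R) : V -> R := foldr pd f s.

Definition smooth_on (U : set V) (f : V -> R) : Prop :=
  forall (s : seq 'I_4) (p : V), U p ->
    {for p, continuous (ipd s f)} /\
    (forall i : 'I_4, derivable (ipd s f) p (ebasis i)).

Definition gmat (A B C : V -> R) (p : V) : 'M[R]_4 :=
  \matrix_(i < 4, j < 4)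
    (let d := ((val j + 4 - val i) %% 4)%N in
     if d == 0%N then A p else if d == 2%N then C p else B p).

Definition gfun (A B C : V -> R) (i j : 'I_4) : V -> R :=
  fun p => gmat A B C p i j.

Definition ginv (A B C : V -> R) (p : V) : 'M[R]_4 := invmx (gmat A B C p).

Definition Gamma (A B C : V -> R) (k i j : 'I_4) : V -> R := fun p =>
  2^-1 * \sum_(l < 4) ginv A B C p k l *
     (pd i (gfun A B C j l) p + pd j (gfun A B C i l) p
      - pd l (gfun A B C i j) p).

(* affinor q with components q_i^j (row i, column j): q_i^j = 1 iff
   j = i+1 mod 4; it acts on components by (qx)^j = x^i q_i^j *)
Definition qmat : 'M[R]_4 :=
  \matrix_(i < 4, j < 4) (((val j == (val i + 1) %% 4)%N)%:R : R).

Definition qv (x : V) : V := x *m qmat.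

(* nabla q = 0 at p: (nabla_i q)_k^j = sum_m (q_k^m Gamma^j_im - Gamma^m_ik q_m^j)
   (q has constant components) *)
Definition q_parallel_at (A B C : V -> R) (p : V) : Prop :=
  forall i k j : 'I_4,
    \sum_(m < 4) (qmat k m * Gamma A B C j i m p
                  - Gamma A B C m i k p * qmat m j) = 0.

(* Riemann tensor components R^l_ijk: R(d_i,d_j)d_k = R^l_ijk d_l, for
   R(x,y)z = nabla_x nabla_y z - nabla_y nabla_x z - nabla_[x,y] z *)
Definition Riem (A B C : V -> R) (l i j k : 'I_4) (p : V) : R :=
  pd i (Gamma A B C l j k) p - pd j (Gamma A B C l i k) p
  + \sum_(m < 4) (Gamma A B C m j k p * Gamma A B C l i m p
                  - Gamma A B C m i k p * Gamma A B C l j m p).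

Definition gval (A B C : V -> R) (p x y : V) : R :=
  \sum_(i < 4) \sum_(j < 4) gmat A B C p i j * x 0 i * y 0 j.

(* R(x,y,z,u) = g(R(x,y)z,u) *)
Definition R4 (A B C : V -> R) (p x y z u : V) : R :=
  \sum_(i < 4) \sum_(j < 4) \sum_(k < 4) \sum_(l < 4) \sum_(s < 4)
    x 0 i * y 0 j * z 0 k * u 0 s * Riem A B C l i j k p * gmat A B C p l s.

Definition sec (A B C : V -> R) (p x y : V) : R :=
  R4 A B C p x y x y /
  (gval A B C p x x * gval A B C p y y - gval A B C p x y ^+ 2).

End Geom.

(* Main.v *)
Require Import Defs.
From HB Require Import structures.
From mathcomp Require Import all_boot all_order all_algebra.
From mathcomp Require Import all_classical all_reals all_analysis.
From mathcomp Require Import ring lra.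
Import Order.TTheory GRing.Theory Num.Theory.
Import numFieldNormedType.Exports.
Local Open Scope classical_set_scope.
Local Open Scope ring_scope.

Section Schwarz.
Variable R : realType.
Local Notation V := 'rV[R]_4.

Lemma line_is_derive (f : V -> R) (c u : V) (t : R) :
  derivable f (t *: u + c) u ->
  is_derive t 1 (fun s : R => f (s *: u + c)) ('D_u f (t *: u + c)).
Proof.
move=> df.
have E : (fun h : R => h^-1 *: (((fun s : R => f (s *: u + c)) \o shift t) (h *: 1) - f (t *: u + c))) = (fun h : R => h^-1 *: ((f \o shift (t *: u + c)) (h *: u) - f (t *: u + c))).
  apply: funext => h /=.
  by rewrite scalerDl /GRing.scale /= mulr1 addrA.
split.
  by rewrite /derivable E.
by rewrite /derive E.
Qed.

Lemma mvt2 (f : V -> R) (u w p : V) (h : R) (Q : set V) :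
  0 < h ->
  (forall s t, 0 <= s <= h -> 0 <= t <= h -> Q (s *: u + (t *: w + p))) ->
  (forall y, Q y -> derivable f y u /\ derivable ('D_u f) y w) ->
  exists s t, [/\ 0 <= s <= h, 0 <= t <= h &
    f (h *: u + (h *: w + p)) - f (h *: u + p) - f (h *: w + p) + f p
     = 'D_w ('D_u f) (s *: u + (t *: w + p)) * h * h ].
Proof.
move=> h0 HQ dQ.
have hh : 0 <= h <= h by apply/andP; split => //; exact: ltW.
have h0' : 0 <= (0:R) <= h by apply/andP; split => //; exact: ltW.
have Q0 r : 0 <= r <= h -> Q (r *: u + p).
  by move=> rh; have := HQ r 0 rh h0'; rewrite scale0r add0r.
pose F1 := fun r : R => f (r *: u + (h *: w + p)).
pose F2 := fun r : R => f (r *: u + p).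
have dphi : forall r, 0 <= r <= h -> is_derive r 1 (F1 - F2)
     ('D_u f (r *: u + (h *: w + p)) - 'D_u f (r *: u + p)).
  move=> r rh.
  have d1 := line_is_derive _ _ _ _ (dQ _ (HQ r h rh hh)).1.
  have d2 := line_is_derive _ _ _ _ (dQ _ (Q0 r rh)).1.
  exact: is_deriveB.
have icc x : x \in `[0, h] -> 0 <= x <= h by rewrite in_itv.
have ioo x : x \in `]0, h[ -> 0 <= x <= h.
  by rewrite in_itv /= => /andP[a b]; rewrite !ltW.
have [xi xih Exi] := MVT h0 (fun x xh => dphi x (ioo x xh))
  (derivable_within_continuous (fun x xh => @ex_derive _ _ _ _ _ _ _ (dphi x (icc x xh)))).
pose psi := fun r : R => 'D_u f (r *: w + (xi *: u + p)).
have dpsi : forall r, 0 <= r <= h -> is_derive r 1 psi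
    ('D_w ('D_u f) (r *: w + (xi *: u + p))).
  move=> r rh; apply: line_is_derive.
  by have := (dQ _ (HQ xi r (ioo xi xih) rh)).2; rewrite addrCA.
have [eta etah Eeta] := MVT h0 (fun x xh => dpsi x (ioo x xh))
  (derivable_within_continuous (fun x xh => @ex_derive _ _ _ _ _ _ _ (dpsi x (icc x xh)))).
exists xi, eta; split; [exact: ioo | exact: ioo |].
have Exi' : (f (h *: u + (h *: w + p)) - f (h *: u + p)) - (f (0 *: u + (h *: w + p)) - f (0 *: u + p)) = ('D_u f (xi *: u + (h *: w + p)) - 'D_u f (xi *: u + p)) * (h - 0) := Exi.
move: Exi' Eeta; rewrite /psi /= !scale0r !add0r !subr0.
move=> E1; rewrite [h *: w + (xi *: u + p)]addrCA => E2.
have H4 : forall a1 a2 a3 a4 : R, a1 - a2 - a3 + a4 = a1 - a2 - (a3 - a4).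
  by move=> *; ring.
rewrite [eta *: w + _]addrCA in E2.
by rewrite H4 E1 E2.
Qed.
Lemma schwarz (f : V -> R) (u w p : V) (N : set V) :
  nbhs p N ->
  (forall y, N y -> [/\ derivable f y u, derivable f y w,
        derivable (fun z => 'D_u f z) y w & derivable (fun z => 'D_w f z) y u]) ->
  {for p, continuous (fun z => 'D_w (fun y => 'D_u f y) z)} ->
  {for p, continuous (fun z => 'D_u (fun y => 'D_w f y) z)} ->
  'D_w (fun y => 'D_u f y) p = 'D_u (fun y => 'D_w f y) p.
Proof.
move=> Np dN ca cb.
set Fa := (fun z => 'D_w (fun y => 'D_u f y) z) in ca *.
set Fb := (fun z => 'D_u (fun y => 'D_w f y) z) in cb *.
rewrite -/(Fa p) -/(Fb p).
apply/eqP; rewrite -subr_eq0 -normr_le0; apply/ler_addgt0Pr => z z0; rewrite add0r.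
have e0 : 0 < z / 2 by rewrite divr_gt0.
set e := z / 2 in e0.
have [d d0 Hd] : exists2 d, 0 < d & forall y, `|p - y| < d ->
    [/\ N y, `|Fa p - Fa y| < e & `|Fb p - Fb y| < e].
  have H : \forall y \near p, [/\ N y, `|Fa p - Fa y| < e & `|Fb p - Fb y| < e].
    have H1 : \forall y \near p, `|Fa p - Fa y| < e by move: ca => /cvgrPdist_lt /(_ e e0).
    have H2 : \forall y \near p, `|Fb p - Fb y| < e by move: cb => /cvgrPdist_lt /(_ e e0).
    near=> y.
    split; [exact: (near Np) | exact: (near H1) | exact: (near H2)].
  by move/nbhs_normP: H => [d d0 Hd]; exists d => // y py; apply: Hd.
have nn : 0 < `|u| + `|w| + 1 by rewrite ltr_wpDl // addr_ge0.
pose h := d / (2 * (`|u| + `|w| + 1)).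
have h0 : 0 < h by rewrite /h divr_gt0 // mulr_gt0.
have key : forall s t, 0 <= s <= h -> 0 <= t <= h ->
    [/\ N (s *: u + (t *: w + p)), `|Fa p - Fa (s *: u + (t *: w + p))| < e
      & `|Fb p - Fb (s *: u + (t *: w + p))| < e].
  move=> s t /andP[s0 sh] /andP[t0 th]; apply: Hd.
  have -> : p - (s *: u + (t *: w + p)) = - (s *: u + t *: w)
    by rewrite addrA opprD addrCA subrr addr0.
  rewrite normrN.
  apply: (le_lt_trans (ler_normD _ _)); rewrite !normrZ !ger0_norm //.
  apply: (@le_lt_trans _ _ (h * (`|u| + `|w|))).
    by rewrite mulrDr; apply: lerD; apply: ler_wpM2r.
  apply: (@le_lt_trans _ _ (h * (`|u| + `|w| + 1))).
    by rewrite ler_pM2l // lerDl.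
  rewrite /h -mulrA gtr_pMr // invfM -mulrA mulVf ?gt_eqF // mulr1.
  by rewrite invf_lt1 // ltr1n.
have keyN s t (sh : 0 <= s <= h) (th : 0 <= t <= h) : N (s *: u + (t *: w + p)).
  by case: (key s t sh th).
have [s1 [t1 [s1h t1h E1]]] := @mvt2 f u w p h N h0
  (fun s t sh th => keyN s t sh th)
  (fun y Ny => let: And4 a _ c _ := dN y Ny in conj a c).
have [s2 [t2 [s2h t2h E2]]] := @mvt2 f w u p h N h0
  (fun s t sh th => ltac:(rewrite addrCA; exact: (keyN t s th sh)))
  (fun y Ny => let: And4 _ b _ d := dN y Ny in conj b d).
rewrite [h *: w + (h *: u + p)]addrCA in E2.
have sw : forall a1 a2 a3 a4 : R, a1 - a2 - a3 + a4 = a1 - a3 - a2 + a4.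
  by move=> *; ring.
rewrite sw E1 in E2.
have hn : h != 0 by rewrite gt_eqF.
move/(mulIf hn)/(mulIf hn): E2 => E.
have [_ Ha _] := key s1 t1 s1h t1h.
have [_ _ Hb] := key t2 s2 t2h s2h.
rewrite /Fa /Fb in Ha Hb *.
rewrite [s2 *: w + _]addrCA in E; rewrite -E in Hb.
set X := 'D_w ('D_u f) (s1 *: u + (t1 *: w + p)) in Ha Hb *.
have T := ler_distD X ('D_w ('D_u f) p) ('D_u ('D_w f) p).
have Hb' : `|X - 'D_u ('D_w f) p| < e by rewrite distrC.
have T2 := ltrD Ha Hb'.
have Ez : e + e = z by rewrite /e -splitr.
rewrite Ez in T2.
exact: (le_trans T (ltW T2)).
Unshelve. all: by end_near.
Qed.
End Schwarz.


Section Alg.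
Variable R : realType.
Local Notation V := 'rV[R]_4.
Local Notation sk := (@ordS 4).
Local Notation pk := (@ord_pred 4).

Lemma ord4P (P : 'I_4 -> Prop) :
  P (@Ordinal 4 0 isT) -> P (@Ordinal 4 1 isT) -> P (@Ordinal 4 2 isT) ->
  P (@Ordinal 4 3 isT) -> forall i, P i.
Proof.
move=> P0 P1 P2 P3 [[|[|[|[|i]]]] Hi] //.
- by rewrite (bool_irrelevance Hi isT).
- by rewrite (bool_irrelevance Hi isT).
- by rewrite (bool_irrelevance Hi isT).
- by rewrite (bool_irrelevance Hi isT).
Qed.

Lemma qmatE (k m : 'I_4) : qmat R k m = (m == sk k)%:R.
Proof. by rewrite mxE -val_eqE /= addn1. Qed.

Lemma qsumL (F : 'I_4 -> R) k : \sum_(m < 4) qmat R k m * F m = F (sk k).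
Proof.
rewrite (bigD1 (sk k)) //= qmatE eqxx mul1r big1 ?addr0 // => m /negbTE mk.
by rewrite qmatE mk mul0r.
Qed.

Lemma qsumR (F : 'I_4 -> R) j : \sum_(m < 4) F m * qmat R m j = F (pk j).
Proof.
rewrite (bigD1 (pk j)) //= qmatE ord_predK eqxx mulr1 big1 ?addr0 // => m mk.
rewrite qmatE; case: eqP => [E|]; last by rewrite mulr0.
by move: mk; rewrite E ordSK eqxx.
Qed.

Lemma qvE (x : V) j : qv x 0 j = x 0 (pk j).
Proof.
rewrite /qv mxE.
under eq_bigr do rewrite qmatE.
rewrite (bigD1 (pk j)) //= ord_predK eqxx mulr1 big1 ?addr0 // => m mk.
case: eqP => [E|]; last by rewrite mulr0.
by move: mk; rewrite E ordSK eqxx.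
Qed.

Lemma qv4 (x : V) : qv (qv (qv (qv x))) = x.
Proof.
apply/matrixP => i j; rewrite (ord1 i) !qvE.
by elim/ord4P: j; congr (x 0 _); apply: val_inj.
Qed.

Lemma gmat_sym (A B C : V -> R) p k l : gmat A B C p k l = gmat A B C p l k.
Proof. by rewrite !mxE; elim/ord4P: k; elim/ord4P: l. Qed.

Lemma gmat_sh (A B C : V -> R) p k l : gmat A B C p (sk k) (sk l) = gmat A B C p k l.
Proof. by rewrite !mxE; elim/ord4P: k; elim/ord4P: l. Qed.


Definition Qf (S : 'I_4 -> 'I_4 -> 'I_4 -> 'I_4 -> R) (x y z u : V) :=
  \sum_(i < 4) \sum_(j < 4) \sum_(k < 4) \sum_(s < 4)
     x 0 i * y 0 j * z 0 k * u 0 s * S i j k s.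

Section QS.
Variable S : 'I_4 -> 'I_4 -> 'I_4 -> 'I_4 -> R.
Hypothesis H12 : forall i j k s, S j i k s = - S i j k s.
Hypothesis H34 : forall i j k s, S i j s k = - S i j k s.
Hypothesis Hbi : forall i j k s, S i j k s + S j k i s + S k i j s = 0.
Hypothesis Hq : forall i j k s, S i j (sk k) (sk s) = S i j k s.

Lemma S_pair i j k s : S k s i j = S i j k s.
Proof.
have B1 := Hbi i j k s. have B2 := Hbi j k s i. have B3 := Hbi k s i j.
have B4 := Hbi s i j k.
have a1 := H12 j k i s. have a2 := H34 j k s i. have a3 := H12 k s j i.
have a4 := H34 k s j i. have a5 := H12 s j k i. have a6 := H34 s j k i.
have a7 := H12 s i k j. have a8 := H34 s i k j. have a9 := H12 i k s j.
have a10 := H34 i k s j. have a11 := H12 i s j k. have a12 := H34 i s j k.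
have a13 := H12 s i j k. have a14 := H34 i j s k. have a15 := H12 j s i k.
have a16 := H34 j s i k. have a17 := H12 k i j s. have a18 := H34 k i j s.
have a19 := H12 j k s i. have a20 := H12 k s i j. have a21 := H34 k s i j.
have a22 := H12 i j k s. have a23 := H12 s j i k. have a24 := H34 s j i k.
have a25 := H34 j i s k. have a26 := H12 j i s k. have a27 := H34 s k j i.
have a28 := H12 k j s i. have a29 := H34 i k j s. have a30 := H12 k i s j.
lra.
Qed.

Lemma Q_anti34 x y z u : Qf S x y z u = - Qf S x y u z.
Proof.
rewrite /Qf -sumrN; apply: eq_bigr => i _; rewrite -sumrN; apply: eq_bigr => j _.
rewrite [in RHS]exchange_big /= -sumrN; apply: eq_bigr => k _.
rewrite -sumrN; apply: eq_bigr => s _.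
rewrite H34; ring.
Qed.

Lemma Q_anti12 x y z u : Qf S x y z u = - Qf S y x z u.
Proof.
rewrite /Qf [in RHS]exchange_big /= -sumrN; apply: eq_bigr => i _.
rewrite -sumrN; apply: eq_bigr => j _.
rewrite -sumrN; apply: eq_bigr => k _.
rewrite -sumrN; apply: eq_bigr => s _.
rewrite H12; ring.
Qed.

Lemma Q_sh34 x y z u : Qf S x y (qv z) (qv u) = Qf S x y z u.
Proof.
rewrite /Qf; apply: eq_bigr => i _; apply: eq_bigr => j _.
rewrite [LHS](reindex_inj (@ordS_inj 4)); apply: eq_bigr => k _.
rewrite [LHS](reindex_inj (@ordS_inj 4)); apply: eq_bigr => s _.
by rewrite !qvE !ordSK Hq.
Qed.

Lemma Q_pair x y z u : Qf S z u x y = Qf S x y z u.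
Proof.
rewrite /Qf.
under eq_bigr do rewrite exchange_big /=.
under eq_bigr do under eq_bigr do rewrite exchange_big /=.
rewrite exchange_big /=.
under eq_bigr do rewrite exchange_big /=.
apply: eq_bigr => k _; apply: eq_bigr => s _; apply: eq_bigr => i _.
apply: eq_bigr => j _.
rewrite S_pair; ring.
Qed.

Lemma Q_inv a b c d : Qf S (qv a) (qv b) (qv c) (qv d) = Qf S a b c d.
Proof. by rewrite Q_sh34 Q_pair Q_sh34 Q_pair. Qed.

Lemma Q_zero y z a : Qf S y z a (qv (qv a)) = 0.
Proof.
have E : Qf S y z a (qv (qv a)) = Qf S y z (qv (qv a)) a.
  by rewrite -{4}(qv4 a) !Q_sh34.
have := Q_anti34 y z a (qv (qv a)); rewrite -E => /eqP.
by rewrite -subr_eq0 opprK -mulr2n mulrn_eq0 /= => /eqP.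
Qed.

End QS.

Lemma gval_sh (A B C : V -> R) p a b : gval A B C p (qv a) (qv b) = gval A B C p a b.
Proof.
rewrite /gval [LHS](reindex_inj (@ordS_inj 4)); apply: eq_bigr => i _.
rewrite [LHS](reindex_inj (@ordS_inj 4)); apply: eq_bigr => j _.
by rewrite !qvE !ordSK gmat_sh.
Qed.

Lemma gval_sym (A B C : V -> R) p a b : gval A B C p a b = gval A B C p b a.
Proof.
rewrite /gval exchange_big /=; apply: eq_bigr => i _; apply: eq_bigr => j _.
rewrite gmat_sym; ring.
Qed.

Lemma final_alg (A B C : V -> R) p (S : 'I_4 -> 'I_4 -> 'I_4 -> 'I_4 -> R) x :
  (forall i j k s, S j i k s = - S i j k s) ->
  (forall i j k s, S i j s k = - S i j k s) ->
  (forall i j k s, S i j k s + S j k i s + S k i j s = 0) ->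
  (forall i j k s, S i j (sk k) (sk s) = S i j k s) ->
  (forall a b c d, R4 A B C p a b c d = Qf S a b c d) ->
    let q1 := qv x in
    let q2 := qv (qv x) in
    let q3 := qv (qv (qv x)) in
    let mu1 := sec A B C p x q1 in
    let mu2 := sec A B C p x q2 in
    let mu3 := sec A B C p q3 x in
    let mu4 := sec A B C p q2 q1 in
    let mu5 := sec A B C p q3 q1 in
    let mu6 := sec A B C p q2 q3 in
    mu1 = mu3 /\ mu1 = mu4 /\ mu1 = mu6 /\ mu2 = 0 /\ mu5 = 0.
Proof.
move=> H12 H34 Hbi Hq HR q1 q2 q3 mu1 mu2 mu3 mu4 mu5 mu6.
have q4 : qv q3 = x by rewrite /q3 qv4.
pose g := gval A B C p.
have g1 : g q1 q1 = g x x by rewrite /g gval_sh.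
have g2 : g q2 q2 = g x x by rewrite /g /q2 !gval_sh.
have g3 : g q3 q3 = g x x by rewrite /g -(gval_sh _ _ _ _ q3) q4.
have g4 : g q3 x = g x q1 by rewrite /g -(gval_sh _ _ _ _ q3) q4.
have g5 : g q2 q1 = g x q1 by rewrite /g gval_sym /q2 gval_sh.
have g6 : g q2 q3 = g x q1 by rewrite /g /q2 /q3 !gval_sh.
have N3 : Qf S q3 x q3 x = Qf S x q1 x q1 by rewrite -(Q_inv S H12 H34 Hbi Hq) q4.
have N4 : Qf S q2 q1 q2 q1 = Qf S x q1 x q1.
  rewrite (Q_anti12 S H12) (Q_anti34 S H34) opprK.
  by rewrite /q2 /q1 (Q_inv S H12 H34 Hbi Hq).
have N6 : Qf S q2 q3 q2 q3 = Qf S x q1 x q1.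
  by rewrite /q2 /q3 /q1 !(Q_inv S H12 H34 Hbi Hq).
have N2 : Qf S x q2 x q2 = 0 by rewrite /q2 (Q_zero S H34 Hq).
have N5 : Qf S q3 q1 q3 q1 = 0.
  by rewrite (Q_anti34 S H34) /q3 /q1 (Q_zero S H34 Hq) oppr0.
rewrite /mu1 /mu2 /mu3 /mu4 /mu5 /mu6 /sec !HR -!/(g _ _).
by rewrite N3 N4 N6 N2 N5 g1 g2 g3 g4 g5 g6 !mul0r; split; [|split; [|split]].
Qed.

End Alg.


Section Geo1.
Variable R : realType.
Local Notation V := 'rV[R]_4.
Local Notation sk := (@ordS 4).
Local Notation pk := (@ord_pred 4).

Lemma gfun_cases (A B C : V -> R) k l :
  [\/ gfun A B C k l = A, gfun A B C k l = B | gfun A B C k l = C].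
Proof.
case E0: (((val l + 4 - val k) %% 4)%N == 0%N).
  by apply: Or31; apply: funext => y; rewrite /gfun mxE /= E0.
case E2: (((val l + 4 - val k) %% 4)%N == 2%N).
  by apply: Or33; apply: funext => y; rewrite /gfun mxE /= E0 E2.
by apply: Or32; apply: funext => y; rewrite /gfun mxE /= E0 E2.
Qed.

Lemma gfun_sym (A B C : V -> R) k l : gfun A B C k l = gfun A B C l k.
Proof. by apply: funext => y; rewrite /gfun gmat_sym. Qed.

Definition lam0 (A B C : V -> R) y := A y + 2 * B y + C y.
Definition lam2 (A B C : V -> R) y := A y - 2 * B y + C y.
Definition lam1 (A B C : V -> R) y := A y - C y.
Definition ia (A B C : V -> R) y :=
  ((lam0 A B C y)^-1 + (lam2 A B C y)^-1 + 2 * (lam1 A B C y)^-1) / 4.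
Definition ib (A B C : V -> R) y :=
  ((lam0 A B C y)^-1 - (lam2 A B C y)^-1) / 4.
Definition ic (A B C : V -> R) y :=
  ((lam0 A B C y)^-1 + (lam2 A B C y)^-1 - 2 * (lam1 A B C y)^-1) / 4.

Lemma lam_pos (A B C : V -> R) y : 0 < B y /\ B y < C y /\ C y < A y ->
  [/\ lam0 A B C y != 0, lam2 A B C y != 0 & lam1 A B C y != 0].
Proof.
move=> [h1 [h2 h3]]; rewrite /lam0 /lam2 /lam1.
split; apply/lt0r_neq0; lra.
Qed.

Lemma gmatX (A B C : V -> R) y : 0 < B y /\ B y < C y /\ C y < A y ->
  gmat A B C y *m gmat (ia A B C) (ib A B C) (ic A B C) y = 1%:M.
Proof.
move=> hy; have [n0 n2 n1] := lam_pos A B C y hy.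
apply/matrixP => i j; rewrite !mxE !big_ord_recl big_ord0 !mxE /=.
rewrite /ia /ib /ic; move: n0 n2 n1; rewrite /lam0 /lam2 /lam1 => n0 n2 n1.
by elim/ord4P: i; elim/ord4P: j => /=; field; rewrite ?n0 ?n1 ?n2.
Qed.

Lemma ginvE (A B C : V -> R) y : 0 < B y /\ B y < C y /\ C y < A y ->
  ginv A B C y = gmat (ia A B C) (ib A B C) (ic A B C) y.
Proof.
move=> hy; have M := gmatX A B C y hy.
have [U1 _] := mulmx1_unit M.
rewrite /ginv -[RHS]mul1mx -(mulVmx U1) -mulmxA M mulmx1 //.
Qed.

Lemma gunit (A B C : V -> R) y : 0 < B y /\ B y < C y /\ C y < A y ->
  gmat A B C y *m ginv A B C y = 1%:M.
Proof. by move=> hy; rewrite ginvE //; apply: gmatX. Qed.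

Lemma contract (g M : 'M[R]_4) (h : 'I_4 -> R) l :
  g *m M = 1%:M -> (forall a b, g a b = g b a) ->
  \sum_(m < 4) (2^-1 * \sum_(n < 4) M m n * h n) * g m l = 2^-1 * h l.
Proof.
move=> gM gs.
have E1 : forall m : 'I_4, (2^-1 * \sum_(n < 4) M m n * h n) * g m l =
    \sum_(n < 4) (2^-1 * h n) * (g l m * M m n).
  move=> m; rewrite mulrAC mulr_sumr; apply: eq_bigr => n _.
  by rewrite (gs m l); ring.
rewrite (eq_bigr _ (fun m _ => E1 m)) exchange_big /=.
have E2 : forall n : 'I_4, \sum_(m < 4) (2^-1 * h n) * (g l m * M m n) =
    (2^-1 * h n) * (1%:M : 'M[R]_4) l n.
  by move=> n; rewrite -mulr_sumr -gM mxE.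
rewrite (eq_bigr _ (fun n _ => E2 n)) (bigD1 l) //= mxE eqxx mulr1.
rewrite big1 ?addr0 // => n nl; rewrite mxE eq_sym (negbTE nl) mulr0 //.
Qed.

Section DerHelp.
Implicit Types f g : V -> R.
Variables (x v : V).

Lemma dvM f g : derivable f x v -> derivable g x v ->
  derivable (fun y => f y * g y) x v.
Proof. by move=> df dg; have := derivableM df dg. Qed.

Lemma dvD f g : derivable f x v -> derivable g x v ->
  derivable (fun y => f y + g y) x v.
Proof. by move=> df dg; have := derivableD df dg. Qed.

Lemma dvB f g : derivable f x v -> derivable g x v ->
  derivable (fun y => f y - g y) x v.
Proof. by move=> df dg; have := derivableB df dg. Qed.

Lemma dvC (c : R) : derivable (fun _ : V => c) x v.
Proof. exact: derivable_cst. Qed.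

Lemma dvV f : f x != 0 -> derivable f x v -> derivable (fun y => (f y)^-1) x v.
Proof. exact: derivableV. Qed.

Lemma dvS n (F : 'I_n -> V -> R) : (forall i, derivable (F i) x v) ->
  derivable (fun y => \sum_(i < n) F i y) x v.
Proof.
move=> dF; have := derivable_sum dF.
suff -> : (\sum_(i < n) F i) = (fun y => \sum_(i < n) F i y) by [].
by apply: funext => y; rewrite fct_sumE.
Qed.

Lemma dM f g : derivable f x v -> derivable g x v ->
  'D_v (fun y => f y * g y) x = 'D_v f x * g x + f x * 'D_v g x.
Proof.
move=> df dg; have := deriveM df dg.
rewrite (_ : f * g = (fun y => f y * g y)) // => ->.
by rewrite /GRing.scale /= addrC mulrC.
Qed.

Lemma dD f g : derivable f x v -> derivable g x v ->
  'D_v (fun y => f y + g y) x = 'D_v f x + 'D_v g x.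
Proof. by move=> df dg; have := deriveD df dg. Qed.

Lemma dS n (F : 'I_n -> V -> R) : (forall i, derivable (F i) x v) ->
  'D_v (fun y => \sum_(i < n) F i y) x = \sum_(i < n) 'D_v (F i) x.
Proof.
move=> dF; have := derive_sum dF.
suff -> : (\sum_(i < n) F i) = (fun y => \sum_(i < n) F i y) by [].
by apply: funext => y; rewrite fct_sumE.
Qed.

End DerHelp.
Arguments dvM {x v f g}. Arguments dvD {x v f g}. Arguments dvB {x v f g}.
Arguments dvC {x v} c. Arguments dvV {x v f}. Arguments dvS {x v n F}.
Arguments dM {x v f g}. Arguments dD {x v f g}. Arguments dS {x v n F}.


Lemma sum4 (F : 'I_4 -> R) : \sum_(i < 4) F i =
  F (@Ordinal 4 0 isT) + F (@Ordinal 4 1 isT) + F (@Ordinal 4 2 isT) + F (@Ordinal 4 3 isT).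
Proof.
rewrite !big_ord_recl big_ord0 addr0 !addrA.
by congr (F _ + F _ + F _ + F _); apply: val_inj.
Qed.

Lemma antisym_alg (g Gi Gj dGij dGji dgi dgj ddij ddji : 'M[R]_4) :
  g^T = g -> dgi = Gi *m g + g *m Gi^T -> dgj = Gj *m g + g *m Gj^T ->
  ddij = dGij *m g + Gj *m dgi + g *m dGij^T + dgi *m Gj^T ->
  ddji = dGji *m g + Gi *m dgj + g *m dGji^T + dgj *m Gi^T ->
  ddij = ddji ->
  let S := (dGij - dGji + Gj *m Gi - Gi *m Gj) *m g in S + S^T = 0.
Proof.
move=> gT E1 E2 E3 E4 E5 S.
have -> : S + S^T = ddij - ddji.
  rewrite E3 E4 E1 E2 /S trmx_mul gT.
  apply/matrixP => k l; rewrite !mxE.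
  rewrite !sum4 !mxE !sum4 !mxE /=.
  ring.
by rewrite E5 subrr.
Qed.

Section Geo2.
Variables (U : set V) (A B C : V -> R).
Hypotheses (oU : open U) (sA : smooth_on U A) (sB : smooth_on U B)
  (sC : smooth_on U C).
Hypothesis pos : forall y, U y -> 0 < B y /\ B y < C y /\ C y < A y.

Lemma nbhsU y : U y -> nbhs y U.
Proof. by move=> Uy; apply: open_nbhs_nbhs. Qed.

Lemma smooth_gfun k l : smooth_on U (gfun A B C k l).
Proof. by case: (gfun_cases A B C k l) => ->. Qed.

Lemma dv_f (f : V -> R) y a : smooth_on U f -> U y -> derivable f y (ebasis R a).
Proof. by move=> sf Uy; exact: ((sf [::] y Uy).2 a). Qed.

Lemma dv_pdf (f : V -> R) b y a : smooth_on U f -> U y ->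
  derivable (pd b f) y (ebasis R a).
Proof. by move=> sf Uy; exact: ((sf [:: b] y Uy).2 a). Qed.

Lemma dv_gfun k l y a : U y -> derivable (gfun A B C k l) y (ebasis R a).
Proof. by move=> Uy; exact: (dv_f _ y a (smooth_gfun k l) Uy). Qed.

Lemma dv_pdgfun k l b y a : U y -> derivable (pd b (gfun A B C k l)) y (ebasis R a).
Proof. by move=> Uy; exact: (dv_pdf _ b y a (smooth_gfun k l) Uy). Qed.

Lemma dv_inv y a : U y ->
  [/\ derivable (ia A B C) y (ebasis R a), derivable (ib A B C) y (ebasis R a)
    & derivable (ic A B C) y (ebasis R a)].
Proof.
move=> Uy; have [n0 n2 n1] := lam_pos A B C y (pos y Uy).
have dA := dv_f A y a sA Uy; have dB := dv_f B y a sB Uy; have dC := dv_f C y a sC Uy.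
have d0 : derivable (lam0 A B C) y (ebasis R a) :=
  dvD (dvD dA (dvM (dvC 2) dB)) dC.
have d2 : derivable (lam2 A B C) y (ebasis R a) :=
  dvD (dvB dA (dvM (dvC 2) dB)) dC.
have d1 : derivable (lam1 A B C) y (ebasis R a) := dvB dA dC.
have i0 := dvV n0 d0; have i2 := dvV n2 d2; have i1 := dvV n1 d1.
split.
- exact: (dvM (dvD (dvD i0 i2) (dvM (dvC 2) i1)) (dvC (4^-1))).
- exact: (dvM (dvB i0 i2) (dvC (4^-1))).
- exact: (dvM (dvB (dvD i0 i2) (dvM (dvC 2) i1)) (dvC (4^-1))).
Qed.

Definition GammaX (l i j : 'I_4) : V -> R := fun y =>
  2^-1 * \sum_(n < 4) gmat (ia A B C) (ib A B C) (ic A B C) y l n *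
     (pd i (gfun A B C j n) y + pd j (gfun A B C i n) y
      - pd n (gfun A B C i j) y).

Lemma Gamma_near l i j y : U y ->
  \forall z \near y, GammaX l i j z = Gamma A B C l i j z.
Proof.
move=> Uy; have := nbhsU y Uy; apply: filterS => z Uz.
by rewrite /GammaX /Gamma ginvE //; apply: pos.
Qed.

Lemma dv_Gamma l i j y a : U y -> derivable (Gamma A B C l i j) y (ebasis R a).
Proof.
move=> Uy; apply: near_eq_derivable (Gamma_near l i j y Uy) _.
have [da db dc] := dv_inv y a Uy.
have dg n : derivable (gfun (ia A B C) (ib A B C) (ic A B C) l n) y (ebasis R a).
  by case: (gfun_cases (ia A B C) (ib A B C) (ic A B C) l n) => ->.
have dh n : derivable (fun z => pd i (gfun A B C j n) z + pd j (gfun A B C i n) z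
      - pd n (gfun A B C i j) z) y (ebasis R a).
  exact: (dvB (dvD (dv_pdgfun j n i y a Uy) (dv_pdgfun i n j y a Uy))
     (dv_pdgfun i j n y a Uy)).
exact: (dvM (dvC 2^-1) (dvS (fun n => dvM (dg n) (dh n)))).
Qed.

Lemma compat y i k l : U y ->
  pd i (gfun A B C k l) y = \sum_(m < 4) (Gamma A B C m i k y * gmat A B C y m l
                                 + Gamma A B C m i l y * gmat A B C y k m).
Proof.
move=> Uy; have gU := gunit A B C y (pos y Uy).
have gs : forall a b, gmat A B C y a b = gmat A B C y b a by move=> a b; apply: gmat_sym.
rewrite big_split /=.
have /= E1 := contract _ _ (fun n => pd i (gfun A B C k n) y + pd k (gfun A B C i n) y
      - pd n (gfun A B C i k) y) l gU gs.
have /= E2 := contract _ _ (fun n => pd i (gfun A B C l n) y + pd l (gfun A B C i n) y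
      - pd n (gfun A B C i l) y) k gU gs.
have E2' : \sum_(m < 4) Gamma A B C m i l y * gmat A B C y k m =
    \sum_(m < 4) Gamma A B C m i l y * gmat A B C y m k.
  by apply: eq_bigr => m _; rewrite gs.
rewrite E2' /Gamma E1 E2 (gfun_sym A B C l k).
by field.
Qed.

Lemma Gsym l i j : Gamma A B C l i j = Gamma A B C l j i.
Proof.
apply: funext => y; rewrite /Gamma; congr (_ * _); apply: eq_bigr => n _.
rewrite (gfun_sym A B C j i); congr (_ * _); ring.
Qed.

Hypothesis qpar : forall y, U y -> q_parallel_at A B C y.

Lemma Gq y i k j : U y -> Gamma A B C j i (sk k) y = Gamma A B C (pk j) i k y.
Proof.
move=> Uy; have := qpar y Uy i k j; rewrite sumrB.
rewrite (@qsumL R (fun m => Gamma A B C j i m y)) (@qsumR R (fun m => Gamma A B C m i k y)).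
by move/eqP; rewrite subr_eq0 => /eqP.
Qed.

Variable p : V.
Hypothesis Up : U p.

Lemma dGq a i k j :
  pd a (Gamma A B C j i (sk k)) p = pd a (Gamma A B C (pk j) i k) p.
Proof.
apply: near_eq_derive; have := nbhsU p Up; apply: filterS => z Uz.
exact: Gq.
Qed.

Lemma GqP i k j : Gamma A B C j i (sk k) p = Gamma A B C (pk j) i k p.
Proof. exact: Gq. Qed.

Lemma F5 a i k l :
  pd a (pd i (gfun A B C k l)) p =
  \sum_(m < 4) (pd a (Gamma A B C m i k) p * gmat A B C p m l
     + Gamma A B C m i k p * pd a (gfun A B C m l) p
     + (pd a (Gamma A B C m i l) p * gmat A B C p k m
     + Gamma A B C m i l p * pd a (gfun A B C k m) p)).
Proof.
have N : \forall y \near p, pd i (gfun A B C k l) y =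
    \sum_(m < 4) (Gamma A B C m i k y * gmat A B C y m l
                  + Gamma A B C m i l y * gmat A B C y k m).
  by have := nbhsU p Up; apply: filterS => z Uz; apply: compat.
rewrite /pd (near_eq_derive _ N).
have dG m i' k' : derivable (Gamma A B C m i' k') p (ebasis R a) := dv_Gamma m i' k' p a Up.
have dg m l' : derivable (fun y => gmat A B C y m l') p (ebasis R a) := dv_gfun m l' p a Up.
rewrite (dS (fun m => dvD (dvM (dG m i k) (dg m l)) (dvM (dG m i l) (dg k m)))).
apply: eq_bigr => m _.
rewrite (dD (dvM (dG m i k) (dg m l)) (dvM (dG m i l) (dg k m))).
by rewrite (dM (dG m i k) (dg m l)) (dM (dG m i l) (dg k m)).
Qed.

Lemma F6 a i k l :
  pd a (pd i (gfun A B C k l)) p = pd i (pd a (gfun A B C k l)) p.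
Proof.
have sf := smooth_gfun k l.
apply: (@schwarz _ (gfun A B C k l) (ebasis R i) (ebasis R a) p U (nbhsU p Up)).
- move=> y Uy; split.
  + exact: (sf [::] y Uy).2.
  + exact: (sf [::] y Uy).2.
  + exact: ((sf [:: i] y Uy).2 a).
  + exact: ((sf [:: a] y Uy).2 i).
- exact: (sf [:: a; i] p Up).1.
- exact: (sf [:: i; a] p Up).1.
Qed.

End Geo2.
End Geo1.


Section Geo3.
Variable R : realType.
Local Notation V := 'rV[R]_4.
Local Notation sk := (@ordS 4).
Local Notation pk := (@ord_pred 4).
Variables (U : set V) (A B C : V -> R).
Hypotheses (oU : open U) (sA : smooth_on U A) (sB : smooth_on U B)
  (sC : smooth_on U C).
Hypothesis pos : forall y, U y -> 0 < B y /\ B y < C y /\ C y < A y.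
Hypothesis qpar : forall y, U y -> q_parallel_at A B C y.
Variable p : V.
Hypothesis Up : U p.
Let compatP := @compat R U A B C pos.
Let F5P := @F5 R U A B C oU sA sB sC pos p Up.
Let F6P := @F6 R U A B C oU sA sB sC p Up.
Let GqPP := @GqP R U A B C qpar p Up.
Let dGqP := @dGq R U A B C oU qpar p Up.


Definition Gm i : 'M[R]_4 := \matrix_(k, m) Gamma A B C m i k p.
Definition dGm a i : 'M[R]_4 := \matrix_(k, m) pd a (Gamma A B C m i k) p.
Definition dgm a : 'M[R]_4 := \matrix_(k, l) pd a (gfun A B C k l) p.
Definition ddgm a i : 'M[R]_4 := \matrix_(k, l) pd a (pd i (gfun A B C k l)) p.
Definition Rm i j : 'M[R]_4 := \matrix_(k, l) Riem A B C l i j k p.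

Lemma gT : (gmat A B C p)^T = gmat A B C p.
Proof. by apply/matrixP => k l; rewrite [LHS]mxE gmat_sym. Qed.

Lemma F4m i : dgm i = Gm i *m gmat A B C p + gmat A B C p *m (Gm i)^T.
Proof.
apply/matrixP => k l; rewrite [LHS]mxE (compatP p i k l Up).
set g := gmat A B C p.
rewrite /dGm /Gm /dgm big_split /= !mxE; congr (_ + _); apply: eq_bigr => m _; rewrite !mxE //.
by rewrite mulrC.
Qed.

Lemma F5m a i : ddgm a i = dGm a i *m gmat A B C p + Gm i *m dgm a
   + gmat A B C p *m (dGm a i)^T + dgm a *m (Gm i)^T.
Proof.
apply/matrixP => k l; rewrite [LHS]mxE F5P.
set g := gmat A B C p.
rewrite /dGm /Gm /dgm !mxE -!big_split /=; apply: eq_bigr => m _; rewrite !mxE.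
by rewrite !addrA; congr (_ + _ + _ + _); exact: mulrC.
Qed.

Lemma RmE i j : Rm i j = dGm i j - dGm j i + Gm j *m Gm i - Gm i *m Gm j.
Proof.
apply/matrixP => k l; rewrite /dGm /Gm !mxE /Riem sumrB !addrA.
by congr (_ + _ - _); apply: eq_bigr => m _; rewrite !mxE.
Qed.

Lemma S34 i j k s :
  (Rm i j *m gmat A B C p) k s + (Rm i j *m gmat A B C p) s k = 0.
Proof.
have E : ddgm i j = ddgm j i.
  by apply/matrixP => k' l'; rewrite [LHS]mxE [RHS]mxE; exact: F6P.
have H := @antisym_alg R _ _ _ _ _ _ _ _ _ gT (F4m i) (F4m j) (F5m i j) (F5m j i) E.
rewrite /= -RmE in H.
move/matrixP: H => /(_ k s).
rewrite [LHS]mxE [RHS]mxE.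
set M := Rm i j *m gmat A B C p.
have -> : M s k = M^T k s by rewrite [RHS]mxE.
by [].
Qed.

End Geo3.


Lemma bianchi_alg (R : realType) (dG : 'I_4 -> 'I_4 -> 'I_4 -> 'I_4 -> R)
  (G : 'I_4 -> 'I_4 -> 'I_4 -> R) :
  (forall l a b, G l a b = G l b a) -> (forall c l a b, dG c l a b = dG c l b a) ->
  forall l i j k,
  let RF l i j k := dG i l j k - dG j l i k +
     \sum_(m < 4) (G m j k * G l i m - G m i k * G l j m) in
  RF l i j k + RF l j k i + RF l k i j = 0.
Proof.
move=> Gs dGs l i j k RF; rewrite /RF !sum4.
rewrite (dGs j l k i) (dGs k l j i) (dGs i l k j).
rewrite !(Gs _ k i) !(Gs _ j i) !(Gs _ k j).
ring.
Qed.

Section Geo4.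
Variable R : realType.
Local Notation V := 'rV[R]_4.
Local Notation sk := (@ordS 4).
Local Notation pk := (@ord_pred 4).
Variables (U : set V) (A B C : V -> R).
Hypotheses (oU : open U) (sA : smooth_on U A) (sB : smooth_on U B)
  (sC : smooth_on U C).
Hypothesis pos : forall y, U y -> 0 < B y /\ B y < C y /\ C y < A y.
Hypothesis qpar : forall y, U y -> q_parallel_at A B C y.
Variable p : V.
Hypothesis Up : U p.
Let GqPP := @GqP R U A B C qpar p Up.
Let dGqP := @dGq R U A B C oU qpar p Up.
Let S34P := @S34 R U A B C oU sA sB sC pos p Up.

Definition Sc (i j k s : 'I_4) : R :=
  \sum_(l < 4) Riem A B C l i j k p * gmat A B C p l s.

Lemma ScE i j k s : (Rm R A B C p i j *m gmat A B C p) k s = Sc i j k s.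
Proof.
rewrite [LHS]mxE /Sc; apply: eq_bigr => l _.
by rewrite [Rm R A B C p i j k l]mxE.
Qed.

Lemma Sc34 i j k s : Sc i j s k = - Sc i j k s.
Proof.
have := S34P i j k s; rewrite !ScE addrC => /eqP.
by rewrite addr_eq0 => /eqP.
Qed.

Lemma RiemN l i j k : Riem A B C l j i k p = - Riem A B C l i j k p.
Proof.
rewrite /Riem opprD opprB -sumrN; congr (_ + _).
by apply: eq_bigr => m _; rewrite opprB.
Qed.

Lemma Sc12 i j k s : Sc j i k s = - Sc i j k s.
Proof.
rewrite /Sc -sumrN; apply: eq_bigr => l _.
by rewrite RiemN mulNr.
Qed.

Lemma RiemB l i j k :
  Riem A B C l i j k p + Riem A B C l j k i p + Riem A B C l k i j p = 0.
Proof.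
have Gs : forall l a b, Gamma A B C l a b p = Gamma A B C l b a p.
  by move=> l' a b; rewrite (@Gsym R A B C l' a b).
have dGs : forall c l a b, pd c (Gamma A B C l a b) p = pd c (Gamma A B C l b a) p.
  by move=> c l' a b; rewrite (@Gsym R A B C l' a b).
have := @bianchi_alg R (fun c l a b => pd c (Gamma A B C l a b) p)
  (fun l a b => Gamma A B C l a b p) Gs dGs l i j k.
by rewrite /Riem /=.
Qed.

Lemma ScB i j k s : Sc i j k s + Sc j k i s + Sc k i j s = 0.
Proof.
rewrite /Sc -!big_split /=; apply: big1 => l _.
by rewrite -!mulrDl RiemB mul0r.
Qed.

Lemma Riemq l i j k : Riem A B C l i j (sk k) p = Riem A B C (pk l) i j k p.
Proof.
rewrite /Riem (dGqP i j k l) (dGqP j i k l); congr (_ + _).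
rewrite [LHS](reindex_inj (@ordS_inj 4)); apply: eq_bigr => m _.
rewrite (GqPP j k (sk m)) (GqPP i m l) (GqPP i k (sk m)) (GqPP j m l).
by rewrite ordSK.
Qed.

Lemma Scq i j k s : Sc i j (sk k) (sk s) = Sc i j k s.
Proof.
rewrite /Sc [LHS](reindex_inj (@ordS_inj 4)); apply: eq_bigr => l _.
by rewrite Riemq ordSK gmat_sh.
Qed.

Lemma R4Q x y z u : R4 A B C p x y z u = Qf R Sc x y z u.
Proof.
rewrite /R4 /Qf; apply: eq_bigr => i _; apply: eq_bigr => j _.
apply: eq_bigr => k _; rewrite exchange_big /=; apply: eq_bigr => s _.
rewrite /Sc mulr_sumr; apply: eq_bigr => l _; by rewrite !mulrA.
Qed.

End Geo4.

Theorem theorem3p1 (R : realType) (U : set 'rV[R]_4) (A B C : 'rV[R]_4 -> R) :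
  open U ->
  smooth_on U A -> smooth_on U B -> smooth_on U C ->
  (forall p, U p -> 0 < B p /\ B p < C p /\ C p < A p) ->
  (forall p, U p -> q_parallel_at A B C p) ->
  forall (p x : 'rV[R]_4), U p ->
    ((x 0 0 - x 0 2) ^+ 2 + (x 0 1 - x 0 3) ^+ 2)
      * (x 0 0 - x 0 1 + x 0 2 - x 0 3) * (x 0 0 + x 0 1 + x 0 2 + x 0 3) != 0 ->
    let q1 := qv x in
    let q2 := qv (qv x) in
    let q3 := qv (qv (qv x)) in
    let mu1 := sec A B C p x q1 in
    let mu2 := sec A B C p x q2 in
    let mu3 := sec A B C p q3 x in
    let mu4 := sec A B C p q2 q1 in
    let mu5 := sec A B C p q3 q1 in
    let mu6 := sec A B C p q2 q3 in
    mu1 = mu3 /\ mu1 = mu4 /\ mu1 = mu6 /\ mu2 = 0 /\ mu5 = 0.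
Proof.
move=> oU sA sB sC pos qpar p x Up _.
exact: (@final_alg R A B C p (@Sc R A B C p) x (@Sc12 R A B C p)
  (@Sc34 R U A B C oU sA sB sC pos p Up)
  (@ScB R A B C p) (@Scq R U A B C oU qpar p Up) (@R4Q R A B C p)).
Qed.
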